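(* A connected bipartite graph $H$ is equimatchable if and only if $V(H)$ admits a bipartition into two independent sets $U$ and $W$ such that every vertex of $U$ is strong in $H$.
   Context: A graph is equimatchable if all its maximal (inclusion-wise) matchings have the same size. A vertex $v$ of a graph $H$ is strong if every maximal matching of $H$ covers $v$. *)

(* Defs.v *)
From mathcomp Require Import all_boot.
Set Implicit Arguments. Unset Strict Implicit. Unset Printing Implicit Defensive.

Section Graph.
Variables (T : finType) (e : rel T).

Definition simple_graph : Prop := symmetric e /\ irreflexive e.

Definition is_edge (A : {set T}) : Prop := exists x y, e x y /\ A = [set x; y].

Definition matching (M : {set {set T}}) : Prop :=
  (forall A, A \in M -> is_edge A) /\
  (forall A B, A \in M -> B \in M -> A != B -> [disjoint A & B]).

Definition maximal_matching (M : {set {set T}}) : Prop :=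
  matching M /\ forall M', matching M' -> M \subset M' -> M' = M.

Definition equimatchable : Prop :=
  forall M1 M2, maximal_matching M1 -> maximal_matching M2 -> #|M1| = #|M2|.

Definition covers (M : {set {set T}}) (v : T) : Prop := exists2 A, A \in M & v \in A.

Definition strong (v : T) : Prop := forall M, maximal_matching M -> covers M v.

Definition independent (S : {set T}) : Prop :=
  forall x y, x \in S -> y \in S -> ~~ e x y.

Definition is_bipartition (U W : {set T}) : Prop :=
  U :|: W = [set: T] /\ U :&: W = set0 /\ independent U /\ independent W.

Definition bipartite : Prop := exists U W, is_bipartition U W.

Definition connected_graph : Prop := forall x y, connect e x y.

End Graph.

(* Main.v *)
Require Import Defs.
From mathcomp Require Import all_boot.
From Stdlib Require Import Classical.
Set Implicit Arguments. Unset Strict Implicit. Unset Printing Implicit Defensive.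

Section S.
Variables (T : finType) (e : rel T).
Hypothesis esym : symmetric e.
Hypothesis eirr : irreflexive e.
Implicit Types (M : {set {set T}}) (A B E : {set T}) (v x y : T).

Definition cv (M : {set {set T}}) v := [exists A in M, v \in A].

Lemma cvP M v : reflect (covers M v) (cv M v).
Proof. by apply: (iffP exists_inP) => [[A H1 H2]|[A H1 H2]]; exists A. Qed.

Lemma cvI M A v : A \in M -> v \in A -> cv M v.
Proof. by move=> H1 H2; apply/exists_inP; exists A. Qed.

Lemma edge2 x y : e x y -> is_edge e [set x; y].
Proof. by move=> H; exists x, y. Qed.

Lemma matching_sub M M' : matching e M -> M' \subset M -> matching e M'.
Proof.
move=> [H1 H2] /subsetP S; split=> [A /S|A B /S HA /S HB]; [exact: H1|exact: H2].
Qed.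

Lemma match_uniq M A B v : matching e M -> A \in M -> B \in M -> v \in A -> v \in B -> A = B.
Proof.
move=> [_ H] HA HB vA vB; apply/eqP; apply/negPn/negP => nAB.
by move: (disjointFr (H _ _ HA HB nAB) vA); rewrite vB.
Qed.

Lemma partner M A v : matching e M -> A \in M -> v \in A -> exists w, e v w /\ A = [set v; w].
Proof.
move=> [H _] HA vA; case: (H _ HA) => x [y [exy EA]]; move: vA; rewrite EA.
case/set2P=> ->; first by exists y.
by exists x; rewrite esym setUC.
Qed.

Lemma matching_add M x y : matching e M -> e x y -> ~~ cv M x -> ~~ cv M y ->
  matching e ([set x; y] |: M).
Proof.
move=> [H1 H2] exy nx ny; split.
  by move=> A /setU1P [->|]; [exact: edge2|exact: H1].
have key B : B \in M -> [disjoint [set x; y] & B].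
  move=> HB; rewrite disjoint_subset; apply/subsetP => z /set2P [] -> ; rewrite inE /=.
    by apply/negP => zB; case/negP: nx; exact: cvI HB zB.
  by apply/negP => zB; case/negP: ny; exact: cvI HB zB.
move=> A B /setU1P [->|HA] /setU1P [->|HB]; rewrite ?eqxx //.
- by move=> _; exact: key.
- by move=> _; rewrite disjoint_sym; exact: key.
- exact: H2.
Qed.

Lemma notin_add M x y : ~~ cv M x -> [set x; y] \notin M.
Proof. by move=> nx; apply/negP => H; case/negP: nx; apply: cvI H _; rewrite set21. Qed.

Lemma card_add M x y : ~~ cv M x -> #|[set x; y] |: M| = #|M|.+1.
Proof. by move=> nx; rewrite cardsU1 notin_add. Qed.

Lemma card_del M A : A \in M -> #|M :\ A| = #|M|.-1.
Proof. by move=> HA; rewrite (cardsD1 A M) HA. Qed.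

Lemma cv_del M E v : cv (M :\ E) v -> cv M v.
Proof. by case/exists_inP => A; rewrite in_setD1 => /andP [_ HA] vA; apply: cvI HA vA. Qed.

Lemma cv_delI M E v : cv M v -> v \notin E -> cv (M :\ E) v.
Proof.
case/exists_inP => A HA vA vE; apply: (@cvI _ A) => //.
by rewrite in_setD1 HA andbT; apply/eqP => AE; rewrite -AE vA in vE.
Qed.

Lemma cv_add M x y v : cv ([set x; y] |: M) v = (v == x) || (v == y) || cv M v.
Proof.
apply/exists_inP/idP.
  move=> [A /setU1P [->|HA] vA]; first by move: vA; rewrite !inE => ->.
  by rewrite (cvI HA vA) !orbT.
case/orP => [/orP [] /eqP ->|H].
- by exists [set x; y]; rewrite ?setU11 ?set21.
- by exists [set x; y]; rewrite ?setU11 ?set22.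
- by case/exists_inP: H => A HA vA; exists A => //; rewrite setU1r.
Qed.

Lemma ext_max M : matching e M -> exists M', maximal_matching e M' /\ M \subset M'.
Proof.
have [n] : exists n, #|~: M| <= n by exists #|~: M|.
elim: n M => [|n IH] M Hn HM; (case: (classic (maximal_matching e M)) => [Hmax|Hnm];
  first by exists M); 
  (have [M' [HM' [sub neq]]] : exists M', matching e M' /\ M \subset M' /\ M' <> M
   by apply: NNPP => H; apply: Hnm; split => // M' H1 H2; apply: NNPP => H3; apply: H; exists M');
  have lt : #|~: M'| < #|~: M| by apply: proper_card; rewrite properC properEneq sub andbT; apply/eqP => E; apply: neq.
- by move: (leq_trans lt Hn).
- have [M'' [H1 H2]] := IH M' (leq_trans (leq_trans lt Hn) (leqnn _)) HM'.
  by exists M''; split => //; apply: subset_trans H2.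
Qed.

Lemma max_nonadj M x y : maximal_matching e M -> e x y -> cv M x || cv M y.
Proof.
move=> [HM Hmax] exy; apply/negPn/negP; rewrite negb_or => /andP [nx ny].
have E := Hmax _ (matching_add HM exy nx ny) (subsetUr _ _).
have : [set x; y] \in M by rewrite -E setU11.
by rewrite (negbTE (notin_add y nx)).
Qed.

Lemma uncov_del M E v : matching e M -> E \in M -> v \in E -> ~~ cv (M :\ E) v.
Proof.
move=> HM HE vE; apply/negP => /exists_inP [A]; rewrite in_setD1 => /andP [nAE HA] vA.
by rewrite (match_uniq HM HA HE vA vE) eqxx in nAE.
Qed.

Lemma uncov_del2 M E v : ~~ cv M v -> ~~ cv (M :\ E) v.
Proof. by move=> H; apply/negP => /cv_del; apply/negP. Qed.

Lemma card_delS M E : E \in M -> #|M| = #|M :\ E|.+1.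
Proof. by move=> HE; rewrite (cardsD1 E M) HE. Qed.

Lemma ncv_add M x y v : ~~ cv ([set x; y] |: M) v = [&& v != x, v != y & ~~ cv M v].
Proof. by rewrite cv_add !negb_or andbA. Qed.

Section Eq.
Hypothesis eqm : equimatchable e.

Lemma size_le M M0 : matching e M -> maximal_matching e M0 -> #|M| <= #|M0|.
Proof.
move=> HM H0; have [M' [H1 H2]] := ext_max HM; rewrite (eqm H0 H1); exact: subset_leq_card.
Qed.

Lemma size_max M M0 : matching e M -> maximal_matching e M0 -> #|M| = #|M0| -> maximal_matching e M.
Proof.
move=> HM H0 E; split => // M' HM' sub; apply/eqP; rewrite eq_sym eqEcard sub /= E.
exact: size_le HM' H0.
Qed.

Variables U W : {set T}.
Hypothesis HUW : is_bipartition e U W.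

Lemma sideUW v : (v \in U) || (v \in W).
Proof. by rewrite -in_setU HUW.1 inE. Qed.

Lemma notUW v : v \in U -> v \in W -> False.
Proof. by move=> H1 H2; have := HUW.2.1; move/setP/(_ v); rewrite !inE H1 H2. Qed.

Lemma edgeU x y : e x y -> x \in U -> y \in W.
Proof.
move=> exy xU; case/orP: (sideUW y) => // yU.
by move: (HUW.2.2.1 _ _ xU yU); rewrite exy.
Qed.

Lemma edgeW x y : e x y -> x \in W -> y \in U.
Proof.
move=> exy xW; case/orP: (sideUW y) => // yW.
by move: (HUW.2.2.2 _ _ xW yW); rewrite exy.
Qed.

Lemma count_cov M : matching e M -> #|[set v in U | cv M v]| = #|M|.
Proof.
move=> HM.
pose h v := odflt set0 [pick A in M | v \in A].
have hP v : cv M v -> h v \in M /\ v \in h v.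
  rewrite /h; case: pickP => [A /andP [HA vA]|N] //= Hc.
  by case/exists_inP: Hc => A HA vA; move: (N A); rewrite HA vA.
have EM : M = h @: [set v in U | cv M v].
  apply/eqP; rewrite eqEsubset; apply/andP; split; apply/subsetP; last first.
    by move=> A /imsetP [v]; rewrite inE => /andP [_ cv'] ->; exact: (hP _ cv').1.
  move=> A HA; have [x [y [exy EA]]] := HM.1 _ HA.
  have [xU|xW] := orP (sideUW x).
    have cx : cv M x by apply: cvI HA _; rewrite EA set21.
    apply/imsetP; exists x; first by rewrite inE xU cx.
    by have [H1 H2] := hP _ cx; apply: match_uniq HM HA H1 _ H2; rewrite EA set21.
  have yU := edgeW exy xW.
  have cy : cv M y by apply: cvI HA _; rewrite EA set22.
  apply/imsetP; exists y; first by rewrite inE yU cy.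
  by have [H1 H2] := hP _ cy; apply: match_uniq HM HA H1 _ H2; rewrite EA set22.
rewrite [in RHS]EM card_in_imset // => v w; rewrite !inE => /andP [vU cvv] /andP [wU cvw] E.
have [H1 H2] := hP _ cvv; have [H3 H4] := hP _ cvw.
rewrite -E in H4.
have [x [y [exy EA]]] := HM.1 _ H1.
have ind := HUW.2.2.1.
move: H2 H4; rewrite EA => /set2P [] Ev /set2P [] Ew; subst v w => //.
  by move: (ind _ _ vU wU); rewrite exy.
by move: (ind _ _ vU wU); rewrite esym exy.
Qed.


Lemma step M a b x1 x2 : e a x1 -> e x1 x2 -> maximal_matching e M -> a \in U -> b \in W ->
  ~~ cv M a -> ~~ cv M b ->
  (forall M', maximal_matching e M' -> ~~ cv M' x2 -> ~~ cv M' b -> False) -> False.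
Proof.
move=> e1 e2 HM aU bW na nb IH.
have x1W := edgeU e1 aU; have x2U := edgeW e2 x1W.
have HMm := HM.1.
have ne_cov v w : cv M v -> ~~ cv M w -> v != w.
  by move=> H1 H2; apply/eqP => E; rewrite -E H1 in H2.
have ne_side v w : v \in U -> w \in W -> v != w.
  by move=> H1 H2; apply/eqP => E; rewrite E in H1; exact: notUW H1 H2.
have c1 : cv M x1 by move: (max_nonadj HM e1); rewrite (negbTE na).
case c2: (cv M x2); last by apply: (IH M) => //; rewrite c2.
have c1' := c1; have c2' := c2.
case/exists_inP: c1 => E1 HE1 x1E1; case/exists_inP: c2 => E2 HE2 x2E2.
have [p [e1p E1e]] := partner HMm HE1 x1E1.
have [q [e2q E2e]] := partner HMm HE2 x2E2.
have pU := edgeW e1p x1W; have qW := edgeU e2q x2U.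
have pE1 : p \in E1 by rewrite E1e set22.
have qE2 : q \in E2 by rewrite E2e set22.
have cp : cv M p := cvI HE1 pE1.
have cq : cv M q := cvI HE2 qE2.
have HMd E : matching e (M :\ E) by apply: matching_sub HMm (subD1set _ _).
case: (eqVneq p x2) => [px2|px2].
  pose M1 := [set a; x1] |: (M :\ E1).
  have na1 : ~~ cv (M :\ E1) a := uncov_del2 _ na.
  have HM1 : maximal_matching e M1.
    apply: (size_max _ HM).
      exact: matching_add (HMd _) e1 na1 (uncov_del HMm HE1 x1E1).
    by rewrite card_add // (card_delS HE1).
  apply: (IH M1) => //; rewrite ncv_add.
    rewrite (ne_cov _ _ c2' na) (ne_side _ _ x2U x1W) /=.
    by apply: uncov_del HMm HE1 _; rewrite -px2.
  rewrite eq_sym (ne_side _ _ aU bW) eq_sym (ne_cov _ _ c1' nb) /=.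
  exact: uncov_del2.
have E12 : E1 != E2.
  apply/eqP => E; move: x2E2; rewrite -E E1e => /set2P [] E'.
    by move: (ne_side _ _ x2U x1W); rewrite E' eqxx.
  by rewrite E' eqxx in px2.
have qx1 : q != x1.
  by apply/eqP => E; move: E12; rewrite (match_uniq HMm HE1 HE2 x1E1) ?eqxx // -E.
have HE2' : E2 \in M :\ E1 by rewrite in_setD1 eq_sym E12.
case Hex : [exists u in U, ~~ cv M u && e q u].
  case/exists_inP: Hex => u uU /andP [nu equ].
  pose M2 := [set u; q] |: (M :\ E2).
  have HM2 : maximal_matching e M2.
    apply: (size_max _ HM).
      apply: matching_add (HMd _) _ (uncov_del2 _ nu) (uncov_del HMm HE2 qE2).
      by rewrite esym.
    by rewrite card_add ?uncov_del2 // (card_delS HE2).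
  apply: (IH M2) => //; rewrite ncv_add.
    rewrite (ne_cov _ _ c2' nu) (ne_side _ _ x2U qW) /=.
    exact: uncov_del HMm HE2 x2E2.
  rewrite eq_sym (ne_side _ _ uU bW) eq_sym (ne_cov _ _ cq nb) /=.
  exact: uncov_del2.
pose M0 := (M :\ E1) :\ E2.
have HM0 : matching e M0 by apply: (matching_sub (HMd E1)); exact: subD1set.
have na0 : ~~ cv M0 a by do 2 apply: uncov_del2.
have nx10 : ~~ cv M0 x1 by apply: uncov_del2; exact: uncov_del HMm HE1 x1E1.
have nx20 : ~~ cv M0 x2 by apply: uncov_del (HMd _) HE2' x2E2.
have nb0 : ~~ cv M0 b by do 2 apply: uncov_del2.
have cardM : #|M| = #|M0|.+2 by rewrite (card_delS HE1) (card_delS HE2').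
case epq : (e p q).
  pose M3 := [set p; q] |: ([set a; x1] |: M0).
  have np : ~~ cv ([set a; x1] |: M0) p.
    rewrite ncv_add (ne_cov _ _ cp na) (ne_side _ _ pU x1W) /=.
    by apply: uncov_del2; exact: uncov_del HMm HE1 pE1.
  have HM3 : maximal_matching e M3.
    apply: (size_max _ HM).
      apply: matching_add _ epq np _.
        exact: matching_add HM0 e1 na0 nx10.
      rewrite ncv_add eq_sym (ne_side _ _ aU qW) qx1 /=.
      exact: uncov_del (HMd _) HE2' qE2.
    by rewrite card_add // card_add.
  apply: (IH M3) => //; rewrite !ncv_add.
    by rewrite eq_sym px2 (ne_side _ _ x2U qW) (ne_cov _ _ c2' na) (ne_side _ _ x2U x1W) nx20.
  by rewrite !(eq_sym b) (ne_cov _ _ cp nb) (ne_cov _ _ cq nb) (ne_side _ _ aU bW) (ne_cov _ _ c1' nb) nb0.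
pose M' := [set x1; x2] |: M0.
have HM'm : matching e M' by apply: matching_add HM0 e2 nx10 nx20.
have cardM' : #|M'| = #|M0|.+1 by rewrite card_add.
suff HM' : maximal_matching e M'.
  by move: (eqm HM HM'); rewrite cardM cardM' => /eqP; rewrite eqSS eqn_leq ltnn.
split => // M'' HM'' sub; apply/eqP; rewrite eqEsubset sub andbT; apply/subsetP => F HF.
have [y [z [eyz EF]]] := HM''.1 _ HF.
have inF G v : G \in M' -> v \in G -> v \in F -> F \in M'.
  move=> HG vG vF; suff -> : F = G by [].
  by apply: match_uniq HM'' HF (subsetP sub _ HG) vF vG.
suff : cv M' y || cv M' z.
  case/orP => /exists_inP [G HG vG]; apply: (inF G _ HG vG); rewrite EF ?set21 ?set22 //.
apply/negPn/negP; rewrite negb_or => /andP [ny nz].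
have unc v : ~~ cv M' v -> v = p \/ v = q \/ ~~ cv M v.
  move=> nv; case cvM : (cv M v); last by right; right.
  case/exists_inP: cvM => B HB vB.
  case: (eqVneq B E1) => [BE|BE1].
    move: vB; rewrite BE E1e => /set2P [] Ev; last by left.
    by move: nv; rewrite Ev cv_add eqxx.
  case: (eqVneq B E2) => [BE|BE2].
    move: vB; rewrite BE E2e => /set2P [] Ev; last by right; left.
    by move: nv; rewrite Ev cv_add eqxx orbT.
  move: nv; rewrite cv_add; suff -> : cv M0 v by rewrite !orbT.
  by apply: (cvI _ vB); rewrite !in_setD1 BE1 BE2 HB.
have hp w : e p w -> ~~ cv M w -> False.
  move=> epw nw; have wW := edgeU epw pU.
  pose M5 := [set p; w] |: ([set a; x1] |: (M :\ E1)).
  have HM5 : matching e M5.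
    apply: matching_add _ epw _ _.
    - exact: matching_add (HMd _) e1 (uncov_del2 _ na) (uncov_del HMm HE1 x1E1).
    - rewrite ncv_add (ne_cov _ _ cp na) (ne_side _ _ pU x1W) /=.
      exact: uncov_del HMm HE1 pE1.
    - rewrite ncv_add eq_sym (ne_side _ _ aU wW) eq_sym (ne_cov _ _ c1' nw) /=.
      exact: uncov_del2.
  have := size_le HM5 HM.
  rewrite card_add; last first.
    rewrite ncv_add (ne_cov _ _ cp na) (ne_side _ _ pU x1W) /=.
    exact: uncov_del HMm HE1 pE1.
  by rewrite card_add ?uncov_del2 // (card_delS HE1) ltnn.
have hq w : e q w -> ~~ cv M w -> False.
  move=> eqw nw; have wU := edgeW eqw qW.
  by move/negbT: Hex => /negP; apply; apply/exists_inP; exists w => //; rewrite nw eqw.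
have eqp : e q p = false by rewrite esym.
case: (unc _ ny) => [Ey|[Ey|Hy]]; case: (unc _ nz) => [Ez|[Ez|Hz]]; subst.
- by rewrite eirr in eyz.
- by rewrite epq in eyz.
- exact: hp eyz Hz.
- by rewrite eqp in eyz.
- by rewrite eirr in eyz.
- exact: hq eyz Hz.
- by apply: (hp y) => //; rewrite esym.
- by apply: (hq y) => //; rewrite esym.
- by move: (max_nonadj HM eyz); rewrite (negbTE Hy) (negbTE Hz).
Qed.

Lemma key n : forall p M a b, size p <= n -> path e a p -> b = last a p ->
  maximal_matching e M -> a \in U -> b \in W -> ~~ cv M a -> ~~ cv M b -> False.
Proof.
elim: n => [|n IH] [|x1 [|x2 p]] M a b //= Hs.
- by move=> _ E _ aU bW; rewrite E in bW; case: (notUW aU bW).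
- by move=> _ E _ aU bW; rewrite E in bW; case: (notUW aU bW).
- move=> /andP [exy _] -> HM _ _ na nb.
  by move: (max_nonadj HM exy); rewrite (negbTE na) (negbTE nb).
- move=> /andP [e1 /andP [e2 Hp]] Hb HM aU bW na nb.
  apply: (step e1 e2 HM aU bW na nb) => M' HM' n2 nb'.
  apply: (IH p M' x2 b) => //; first exact: ltnW.
  exact: edgeW e2 (edgeU e1 aU).
Qed.
End Eq.
End S.

Lemma bip_swap (T : finType) (e : rel T) U W : is_bipartition e U W -> is_bipartition e W U.
Proof. by case=> [H1 [H2 [H3 H4]]]; split; [rewrite setUC|split; [rewrite setIC|]]. Qed.

Lemma nonstrong (T : finType) (e : rel T) (U : {set T}) :
  ~ (forall u, u \in U -> strong e u) ->
  exists u M, [/\ u \in U, maximal_matching e M & ~~ cv M u].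
Proof.
move=> H; apply: NNPP => N; apply: H => u uU M HM; apply/cvP.
case c: (cv M u) => //; exfalso; apply: N; exists u, M; by rewrite c.
Qed.

Lemma all_cov (T : finType) (e : rel T) (U : {set T}) M :
  (forall u, u \in U -> strong e u) -> maximal_matching e M -> [set v in U | cv M v] = U.
Proof.
move=> H HM; apply/setP => v; rewrite inE; case vU: (v \in U) => //=.
by apply/cvP; apply: H.
Qed.

Theorem mainTheorem13 (T : finType) (e : rel T) :
  simple_graph e -> connected_graph e -> bipartite e ->
  (equimatchable e <->
   exists U W : {set T}, is_bipartition e U W /\ (forall u, u \in U -> strong e u)).
Proof.
move=> [esym eirr] conn [U [W HUW]]; split; last first.
  move=> [U' [W' [HUW' HU]]] M1 M2 HM1 HM2.
  rewrite -(count_cov esym HUW' HM1.1) -(count_cov esym HUW' HM2.1).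
  by rewrite (all_cov HU HM1) (all_cov HU HM2).
move=> eqm.
case: (classic (forall u, u \in U -> strong e u)) => HU; first by exists U, W.
case: (classic (forall w, w \in W -> strong e w)) => HW.
  by exists W, U; split => //; apply: bip_swap.
have HWU := bip_swap HUW.
have [a [M1 [aU HM1 na]]] := nonstrong HU.
have [w0 [M2 [w0W HM2 nw0]]] := nonstrong HW.
have [b bW nb] : exists2 b, b \in W & ~~ cv M1 b.
  have lt : #|[set v in W | cv M1 v]| < #|W|.
    rewrite (count_cov esym HWU HM1.1) (eqm _ _ HM1 HM2) -(count_cov esym HWU HM2.1).
    apply: proper_card; rewrite properE; apply/andP; split.
      by apply/subsetP => v; rewrite inE => /andP [].
    by apply/negP => /subsetP /(_ _ w0W); rewrite inE w0W (negbTE nw0).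
  have : ~~ (W \subset [set v in W | cv M1 v]).
    by apply/negP => /subset_leq_card; rewrite leqNgt lt.
  case/subsetPn => v vW; rewrite inE vW /= => nv; by exists v.
have /connectP [p Hp Hb] := conn a b.
exfalso; exact: (key esym eirr eqm HUW (leqnn (size p)) Hp Hb HM1 aU bW na nb).
Qed.
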